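(* For any directed graph $G=(V,E,w)$ with edge weights $w:E\to\mathbb{R}_+$ and vertex weights $\pi:V\to\mathbb{R}_+$, $\lambda^{\triangle}_\pi(G)\le 2\,\vec\phi_\pi(G)$.
   Context: Let $n=|V|$. $\vec\phi_\pi(G)=\min_{\emptyset\ne S\subsetneq V}\frac{\min\{w(\delta^+(S)),w(\delta^-(S))\}}{\min\{\pi(S),\pi(\overline S)\}}$, where $\delta^+(S)$ / $\delta^-(S)$ are the edges leaving / entering $S$ and $\pi(S)=\sum_{i\in S}\pi(i)$. $\mathcal F(G)$ is the set of circulations $F:E\to\mathbb{R}_{\ge0}$ with $F(e)\le w(e)$ ($F(i,j)=0$ if $ij\notin E$). $\lambda^{\triangle}_\pi(G)=\min\max_{F\in\mathcal F(G)}\sum_{i<j}\frac12(F(i,j)+F(j,i))\|v_i-v_j\|^2$, the min over $v_1,\dots,v_n\in\mathbb{R}^n$ with $\sum_i\pi(i)v_i=0$, $\sum_i\pi(i)\|v_i\|^2=1$, and $\|v_i-v_k\|^2+\|v_k-v_j\|^2\ge\|v_i-v_j\|^2$ for all $i,j,k$. *)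

(* Defs.v *)
From HB Require Import structures.
From mathcomp Require Import all_boot all_order all_algebra.
From mathcomp Require Import boolp classical_sets reals.
Set Implicit Arguments. Unset Strict Implicit. Unset Printing Implicit Defensive.
Import Order.TTheory GRing.Theory Num.Theory.
Local Open Scope ring_scope.
Local Open Scope classical_set_scope.

Section Defs.
Variables (R : realType) (n : nat).
(* Vertex set V = 'I_n.  Edge set E : rel 'I_n (directed pairs (i,j)),
   edge weights w i j (meaningful for E i j), vertex weights pi. *)
Variables (E : rel 'I_n) (w : 'I_n -> 'I_n -> R) (pi : 'I_n -> R).

Definition wout (S : {set 'I_n}) : R :=
  \sum_(i in S) \sum_(j in ~: S | E i j) w i j.
Definition win (S : {set 'I_n}) : R :=
  \sum_(i in ~: S) \sum_(j in S | E i j) w i j.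
Definition piS (S : {set 'I_n}) : R := \sum_(i in S) pi i.

Definition cond_ratio (S : {set 'I_n}) : R :=
  Num.min (wout S) (win S) / Num.min (piS S) (piS (~: S)).

Definition dir_conductance : R :=
  inf [set r | exists S : {set 'I_n}, [/\ (0 < #|S|)%N, (#|S| < n)%N & r = cond_ratio S]].

Definition is_circulation (F : 'I_n -> 'I_n -> R) : Prop :=
  [/\ (forall i j, 0 <= F i j),
      (forall i j, E i j -> F i j <= w i j),
      (forall i j, ~~ E i j -> F i j = 0) &
      (forall i, \sum_j F i j = \sum_j F j i)].

Definition sqdist (x y : 'rV[R]_n) : R := \sum_(k < n) (x 0 k - y 0 k) ^+ 2.
Definition sqnorm (x : 'rV[R]_n) : R := \sum_(k < n) (x 0 k) ^+ 2.

Definition feasible_vecs (v : 'I_n -> 'rV[R]_n) : Prop :=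
  [/\ \sum_i pi i *: v i = 0,
      \sum_i pi i * sqnorm (v i) = 1 &
      (forall i j k, sqdist (v i) (v k) + sqdist (v k) (v j) >= sqdist (v i) (v j))].

Definition sdp_obj (F : 'I_n -> 'I_n -> R) (v : 'I_n -> 'rV[R]_n) : R :=
  \sum_(i < n) \sum_(j < n | (i < j)%N) 2^-1 * (F i j + F j i) * sqdist (v i) (v j).

Definition sdp_value (v : 'I_n -> 'rV[R]_n) : R :=
  sup [set y | exists F, is_circulation F /\ y = sdp_obj F v].

Definition lambda_tri : R :=
  inf [set x | exists v, feasible_vecs v /\ x = sdp_value v].
End Defs.

(* Main.v *)
Require Import Defs.
From HB Require Import structures.
From mathcomp Require Import all_boot all_order all_algebra.
From mathcomp Require Import boolp classical_sets reals.
From mathcomp Require Import ring lra zify.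
Import Order.TTheory GRing.Theory Num.Theory.
Local Open Scope ring_scope.

Section Helpers.
Variables (R : realType) (n : nat).

Lemma sum_splitS (S : {set 'I_n}) (f : 'I_n -> R) :
  \sum_i f i = \sum_(i in S) f i + \sum_(i in ~: S) f i.
Proof.
rewrite (bigID (mem S)) /=; congr (_ + _); apply: eq_bigl => i.
by rewrite !inE.
Qed.

Lemma pairs_sum (h : 'I_n -> 'I_n -> R) : (forall i, h i i = 0) ->
  \sum_(i < n) \sum_(j < n | (i < j)%N) (h i j + h j i) = \sum_i \sum_j h i j.
Proof.
move=> h0.
under eq_bigr do rewrite big_split /=.
rewrite big_split /=.
have -> : \sum_(i < n) \sum_(j < n | (i < j)%N) h j i
   = \sum_(i < n) \sum_(j < n) (if (j < i)%N then h i j else 0).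
  under eq_bigr do rewrite big_mkcond /=.
  rewrite exchange_big /=. by [].
rewrite -big_split /=; apply: eq_bigr => i _.
rewrite big_mkcond -big_split /=; apply: eq_bigr => j _.
case: (ltngtP i j) => [//|//|/val_inj ->]; first by rewrite addr0.
  by rewrite add0r.
by rewrite h0 addr0.
Qed.

Lemma conserv_cut (F : 'I_n -> 'I_n -> R) (S : {set 'I_n}) :
  (forall i, \sum_j F i j = \sum_j F j i) ->
  \sum_(i in S) \sum_(j in ~: S) F i j = \sum_(i in ~: S) \sum_(j in S) F i j.
Proof.
move=> cons.
have H : \sum_(i in S) \sum_j F i j = \sum_(i in S) \sum_j F j i.
  by apply: eq_bigr => i _; apply: cons.
move: H; under eq_bigr do rewrite (sum_splitS S).
under [X in _ = X -> _]eq_bigr do rewrite (sum_splitS S).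
rewrite !big_split /=.
rewrite [X in _ = X + _]exchange_big [X in _ = _ + X]exchange_big /=.
by move/addrI.
Qed.


Lemma flow_le (E : rel 'I_n) (w F : 'I_n -> 'I_n -> R) (A B : {set 'I_n}) :
  (forall i j, E i j -> F i j <= w i j) -> (forall i j, ~~ E i j -> F i j = 0) ->
  \sum_(i in A) \sum_(j in B) F i j <= \sum_(i in A) \sum_(j in B | E i j) w i j.
Proof.
move=> Fw Fz; apply: ler_sum => i _.
rewrite (bigID (fun j => E i j)) /= [X in _ + X]big1 ?addr0.
  by apply: ler_sum => j /andP[_ /Fw].
by move=> j /andP[_ /Fz].
Qed.

Lemma piS_gt0 (pi : 'I_n -> R) (A : {set 'I_n}) : (forall i, 0 < pi i) ->
  (0 < #|A|)%N -> 0 < piS pi A.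
Proof.
move=> pipos /card_gt0P[i iA]; rewrite /piS (bigD1 i) //=.
apply: (lt_le_trans (pipos i)); rewrite lerDl.
by apply: sumr_ge0 => j _; apply: ltW.
Qed.

Lemma circ0 (E : rel 'I_n) (w : 'I_n -> 'I_n -> R) :
  (forall i j, E i j -> 0 < w i j) -> is_circulation E w (fun _ _ => 0).
Proof. by move=> wpos; split=> // i j /wpos /ltW. Qed.

Lemma obj0 (v : 'I_n -> 'rV[R]_n) : sdp_obj (fun _ _ => 0) v = 0.
Proof.
rewrite /sdp_obj big1 // => i _; rewrite big1 // => j _.
by rewrite addr0 mulr0 mul0r.
Qed.

Lemma sdp_ge0 (E : rel 'I_n) (w : 'I_n -> 'I_n -> R) v :
  (forall i j, E i j -> 0 < w i j) -> 0 <= sdp_value E w v.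
Proof.
move=> wpos; rewrite /sdp_value.
set A := (X in sup X).
have A0 : A 0 by exists (fun _ _ => 0); split; [exact: circ0 | rewrite obj0].
case: (pselect (has_ubound A)) => hub.
  exact: (ub_le_sup hub A0).
by rewrite sup_out // => -[_].
Qed.


Lemma key (E : rel 'I_n) (w : 'I_n -> 'I_n -> R) (pi : 'I_n -> R) :
  (forall i j, E i j -> 0 < w i j) -> (forall i, 0 < pi i) ->
  forall S : {set 'I_n}, (0 < #|S|)%N -> (#|S| < n)%N ->
  lambda_tri E w pi <= 2 * cond_ratio E w pi S.
Proof.
move=> wpos pipos S S0 Sn.
have SC0 : (0 < #|~: S|)%N by have := cardsC S; rewrite card_ord; lia.
pose p := piS pi S; pose q := piS pi (~: S).
have p0 : 0 < p := piS_gt0 pi S pipos S0.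
have q0 : 0 < q := piS_gt0 pi (~: S) pipos SC0.
pose N : R := n%:R.
have N0 : 0 < N by rewrite ltr0n; lia.
pose P := N * p * q * (p + q).
have P0 : 0 < P by rewrite /P !mulr_gt0 // addr_gt0.
pose c := (Num.sqrt P)^-1.
have c2 : c ^+ 2 * P = 1.
  by rewrite /c exprVn sqr_sqrtr ?ltW // mulVf // gt_eqF.
pose x := fun i => if i \in S then q * c else - (p * c).
pose v := fun i : 'I_n => (const_mx (x i) : 'rV[R]_n).
have sqd : forall i j, sqdist (v i) (v j) = N * (x i - x j) ^+ 2.
  move=> i j; rewrite /sqdist; under eq_bigr do rewrite !mxE.
  by rewrite sumr_const card_ord mulr_natl.
have sqn : forall i, sqnorm (v i) = N * x i ^+ 2.
  move=> i; rewrite /sqnorm; under eq_bigr do rewrite !mxE.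
  by rewrite sumr_const card_ord mulr_natl.
have xS : forall i, i \in S -> x i = q * c by move=> i iS; rewrite /x iS.
have xC : forall i, i \in ~: S -> x i = - (p * c).
  by move=> i; rewrite inE => /negbTE iS; rewrite /x iS.
have feas : feasible_vecs pi v.
  split.
  - apply/rowP => k; rewrite summxE !mxE.
    under eq_bigr do rewrite !mxE.
    rewrite (sum_splitS S).
    under eq_bigr => i iS do rewrite xS //.
    under [X in _ + X]eq_bigr => i iS do rewrite xC //.
    rewrite -!mulr_suml -/(piS pi S) -/(piS pi (~: S)) -/p -/q.
    ring.
  - under eq_bigr do rewrite sqn.
    rewrite (sum_splitS S).
    under eq_bigr => i iS do rewrite xS //.
    under [X in _ + X]eq_bigr => i iS do rewrite xC //.
    rewrite -!mulr_suml -/(piS pi S) -/(piS pi (~: S)) -/p -/q.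
    rewrite -c2 /P; ring.
  - move=> i j k; rewrite !sqd.
    have : [\/ x k = x i, x k = x j | x i = x j].
      by rewrite /x; case: (i \in S); case: (k \in S); case: (j \in S); by [apply: Or31 | apply: Or32 | apply: Or33].
    case=> ->; rewrite ?subrr expr0n /= mulr0 ?add0r ?addr0 //.
    by rewrite addr_ge0 // mulr_ge0 ?sqr_ge0 // ltW.
have lam : lambda_tri E w pi <= sdp_value E w v.
  apply: ge_inf; last by exists v.
  by exists 0 => y [u [_ ->]]; apply: sdp_ge0.
apply: (le_trans lam).
pose D := N * ((p + q) * c) ^+ 2.
have D0 : 0 <= D by rewrite mulr_ge0 ?sqr_ge0 // ltW.
have Dpq : D * p * q = p + q.
  have -> : D * p * q = (p + q) * (c ^+ 2 * P) by rewrite /D /P; ring.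
  by rewrite c2 mulr1.
pose m := Num.min (wout E w S) (win E w S).
have m0 : 0 <= m.
  rewrite le_min; apply/andP; split; apply: sumr_ge0 => i _;
    apply: sumr_ge0 => j /andP[_ /wpos /ltW] //.
pose mn := Num.min p q.
have mn0 : 0 < mn by rewrite lt_min p0 q0.
have Dmn : D <= 2 / mn.
  rewrite ler_pdivlMr //; have [pq|pq] := leP p q.
    rewrite /mn (min_l pq); nra.
  rewrite /mn (min_r (ltW pq)); nra.
have fin : D * m <= 2 * cond_ratio E w pi S.
  rewrite /cond_ratio -/m -/p -/q -/mn.
  apply: (le_trans (ler_wpM2r m0 Dmn)).
  by rewrite -mulrA (mulrC _ m).
apply: (le_trans _ fin); apply: ge_sup.
  by exists 0, (fun _ _ => 0); split; [exact: circ0 | rewrite obj0].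
move=> y [F [[F0 Fw Fz Fc] ->]].
pose h := fun i j => if (i \in S) != (j \in S) then F i j else 0.
rewrite /sdp_obj.
have -> : \sum_(i < n) \sum_(j < n | (i < j)%N)
    2^-1 * (F i j + F j i) * sqdist (v i) (v j)
  = 2^-1 * D * \sum_(i < n) \sum_(j < n | (i < j)%N) (h i j + h j i).
  rewrite mulr_sumr; apply: eq_bigr => i _.
  rewrite mulr_sumr; apply: eq_bigr => j _.
  rewrite sqd /h /D /x; case: (i \in S); case: (j \in S) => /=; ring.
rewrite pairs_sum; last by move=> i; rewrite /h eqxx.
rewrite (sum_splitS S).
have -> : \sum_(i in S) \sum_j h i j = \sum_(i in S) \sum_(j in ~: S) F i j.
  apply: eq_bigr => i iS; rewrite (sum_splitS S) big1 ?add0r.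
    apply: eq_bigr => j; rewrite inE => /negbTE jS.
    by rewrite /h iS jS.
  by move=> j jS; rewrite /h iS jS.
have -> : \sum_(i in ~: S) \sum_j h i j = \sum_(i in ~: S) \sum_(j in S) F i j.
  apply: eq_bigr => i; rewrite inE => /negbTE iS.
  rewrite (sum_splitS S) [X in _ + X]big1 ?addr0.
    by apply: eq_bigr => j jS; rewrite /h iS jS.
  by move=> j; rewrite inE => /negbTE jS; rewrite /h iS jS.
rewrite -(conserv_cut F S Fc).
set a := \sum_(i in S) \sum_(j in ~: S) F i j.
have am : a <= m.
  rewrite le_min; apply/andP; split.
    exact: flow_le.
  rewrite /a (conserv_cut F S Fc); exact: flow_le.
have -> : 2^-1 * D * (a + a) = D * a by field.
exact: ler_wpM2l.
Qed.

End Helpers.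

Theorem mainTheorem7 (R : realType) (n : nat) (E : rel 'I_n)
    (w : 'I_n -> 'I_n -> R) (pi : 'I_n -> R) :
  (1 < n)%N ->
  (forall i j, E i j -> 0 < w i j) ->
  (forall i, 0 < pi i) ->
  lambda_tri E w pi <= 2 * dir_conductance E w pi.
Proof.
move=> n1 wpos pipos.
have h2 : lambda_tri E w pi / 2 <= dir_conductance E w pi.
  apply: lb_le_inf.
    have i0 : (0 < n)%N by lia.
    exists (cond_ratio E w pi [set Ordinal i0]), [set Ordinal i0].
    by rewrite cards1; split.
  move=> y [S [S0 Sn ->]].
  rewrite ler_pdivrMr // mulrC; exact: key.
by rewrite -ler_pdivrMl // mulrC.
Qed.
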